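(* Let $(R,\mathfrak{m})$ be a one-dimensional Cohen–Macaulay local ring, let $J$ be a regular ideal with a principal reduction $(x)$, and let $I=\operatorname{tr}(J)$. Consider the conditions: (1) $I\cong I^2$; (2) $I=(x):_R J$; (3) $I\cong(x):_R J$; (4) $I\cong J^*$. Then (1) implies (2), and (2), (3), (4) are equivalent.
   Context: $J^*=\operatorname{Hom}_R(J,R)$ and $\operatorname{tr}(J)$ is the image of $J\otimes_R J^*\to R$, $a\otimes\alpha\mapsto\alpha(a)$. An ideal is regular if it contains a nonzerodivisor. A principal reduction of $J$ is a principal ideal $(x)\subseteq J$ with $xJ^n=J^{n+1}$ for some $n$. *)

(* Defs.v *)
From mathcomp Require Import all_boot all_algebra.
Set Implicit Arguments. Unset Strict Implicit. Unset Printing Implicit Defensive.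
Import GRing.Theory.
Local Open Scope ring_scope.

(* Ideals of a commutative ring R are represented as predicates R -> Prop. *)
Section Defs.
Variable R : comUnitRingType.

Definition is_ideal (J : R -> Prop) : Prop :=
  [/\ J 0, (forall a b, J a -> J b -> J (a + b)) & (forall r a, J a -> J (r * a))].

Definition fg_ideal (J : R -> Prop) : Prop :=
  exists s : seq R, forall r,
    J r <-> exists c : seq R, size c = size s /\ r = \sum_(i < size s) c`_i * s`_i.

Definition noetherian : Prop := forall J, is_ideal J -> fg_ideal J.

(* local ring: the non-units form an ideal (the maximal ideal) *)
Definition local_ring : Prop :=
  forall a b : R, a \isn't a GRing.unit -> b \isn't a GRing.unit ->
    (a + b) \isn't a GRing.unit.

Definition max_ideal (r : R) : Prop := r \isn't a GRing.unit.

Definition prime_ideal (P : R -> Prop) : Prop :=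
  [/\ is_ideal P, ~ P 1 & forall a b, P (a * b) -> P a \/ P b].

Definition strict_sub (P Q : R -> Prop) : Prop :=
  (forall r, P r -> Q r) /\ exists r, Q r /\ ~ P r.

Definition krull_dim_one : Prop :=
  (exists P Q, prime_ideal P /\ prime_ideal Q /\ strict_sub P Q) /\
  ~ (exists P0 P1 P2, [/\ prime_ideal P0, prime_ideal P1, prime_ideal P2,
        strict_sub P0 P1 & strict_sub P1 P2]).

Definition nzd (a : R) : Prop := forall b, a * b = 0 -> b = 0.

Definition depth_pos : Prop := exists a, max_ideal a /\ nzd a.

(* one-dimensional Cohen--Macaulay local ring: depth = dim = 1 *)
Definition CM_local_dim_one : Prop :=
  [/\ noetherian, local_ring, krull_dim_one & depth_pos].

Definition regular_ideal (J : R -> Prop) : Prop := exists a, J a /\ nzd a.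

Definition ideal_mul (I K : R -> Prop) (r : R) : Prop :=
  exists s : seq (R * R),
    (forall p, p \in s -> I p.1 /\ K p.2) /\ r = \sum_(p <- s) p.1 * p.2.

Fixpoint ideal_pow (J : R -> Prop) (n : nat) : R -> Prop :=
  match n with
  | 0%N => fun _ => True
  | n.+1 => ideal_mul (ideal_pow J n) J
  end.

Definition principal (x : R) (r : R) : Prop := exists s, r = s * x.

Definition principal_reduction (x : R) (J : R -> Prop) : Prop :=
  J x /\ exists n : nat, forall r, ideal_pow J n.+1 r <-> exists y, ideal_pow J n y /\ r = x * y.

Definition colon (I J : R -> Prop) (r : R) : Prop := forall j, J j -> I (r * j).

(* R-linear maps J -> R (elements of J^* = Hom_R(J,R)), given by their values on J *)
Definition hom_to_R (J : R -> Prop) (f : R -> R) : Prop :=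
  (forall a b, J a -> J b -> f (a + b) = f a + f b) /\
  (forall r a, J a -> f (r * a) = r * f a).

(* trace ideal: image of J ⊗ J^* -> R, a ⊗ α ↦ α(a) *)
Definition trace_ideal (J : R -> Prop) (r : R) : Prop :=
  exists s : seq (R * (R -> R)),
    (forall i, (i < size s)%N -> J (nth (0, fun _ => 0) s i).1 /\
                                 hom_to_R J (nth (0, fun _ => 0) s i).2) /\
    r = \sum_(i < size s) (nth (0, fun _ => 0) s i).2 (nth (0, fun _ => 0) s i).1.

Definition ideal_iso (I K : R -> Prop) : Prop :=
  exists f : R -> R,
    [/\ forall a b, I a -> I b -> f (a + b) = f a + f b,
        forall r a, I a -> f (r * a) = r * f a,
        forall a, I a -> K (f a),
        forall a b, I a -> I b -> f a = f b -> a = b &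
        forall c, K c -> exists a, I a /\ f a = c].

(* isomorphism of R-modules  I ≅ J^* = Hom_R(J,R); homs are compared by
   their values on J *)
Definition iso_dual (I J : R -> Prop) : Prop :=
  exists Phi : R -> R -> R,
    [/\ forall a, I a -> hom_to_R J (Phi a),
        forall a b, I a -> I b -> forall j, J j -> Phi (a + b) j = Phi a j + Phi b j,
        forall r a, I a -> forall j, J j -> Phi (r * a) j = r * Phi a j,
        forall a b, I a -> I b -> (forall j, J j -> Phi a j = Phi b j) -> a = b &
        forall f, hom_to_R J f -> exists a, I a /\ forall j, J j -> Phi a j = f j].

Definition ideal_eq (I K : R -> Prop) : Prop := forall r, I r <-> K r.

End Defs.

(* Main.v *)
Require Import Defs.
From mathcomp Require Import all_boot all_algebra ring.
From mathcomp Require Import fingroup perm.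
From Stdlib Require Import ClassicalEpsilon.
Set Implicit Arguments. Unset Strict Implicit. Unset Printing Implicit Defensive.
Import GRing.Theory.
Local Open Scope ring_scope.
From Stdlib Require Import ClassicalEpsilon.

Section Gen.
Variable R : comUnitRingType.
Implicit Types (P Q K : R -> Prop).

Lemma mul_ind P Q (T : R -> Prop) m :
  T 0 -> (forall u v, T u -> T v -> T (u + v)) ->
  (forall p q, P p -> Q q -> T (p * q)) -> ideal_mul P Q m -> T m.
Proof.
move=> T0 TD Tg [s [Hs ->]]; elim: s Hs => [|p s IH] Hs; first by rewrite big_nil.
rewrite big_cons; apply: TD.
  by have [] := Hs p (mem_head _ _); apply: Tg.
by apply: IH => q qs; apply: Hs; rewrite in_cons qs orbT.
Qed.

Lemma mul0 P Q : ideal_mul P Q 0.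
Proof. by exists [::]; split => //; rewrite big_nil. Qed.

Lemma mulgen P Q p q : P p -> Q q -> ideal_mul P Q (p * q).
Proof.
move=> Pp Qq; exists [:: (p, q)]; split; last by rewrite big_seq1.
by move=> r; rewrite inE => /eqP ->.
Qed.

Lemma mulD P Q u v : ideal_mul P Q u -> ideal_mul P Q v -> ideal_mul P Q (u + v).
Proof.
move=> [s [Hs ->]] [t [Ht ->]]; exists (s ++ t); split; last by rewrite big_cat.
by move=> r; rewrite mem_cat => /orP [] ?; [apply: Hs|apply: Ht].
Qed.

Lemma nzd_mul (a b : R) : nzd a -> nzd b -> nzd (a * b).
Proof. by move=> Ha Hb c; rewrite -mulrA => /Ha /Hb. Qed.

Lemma nzd_exp (a : R) k : nzd a -> nzd (a ^+ k).
Proof.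
move=> Ha; elim: k => [|k IH]; first by move=> c; rewrite expr0 mul1r.
by rewrite exprS; apply: nzd_mul.
Qed.

Lemma nzd_cancel (a u v : R) : nzd a -> a * u = a * v -> u = v.
Proof. by move=> Ha E; apply/eqP; rewrite -subr_eq0; apply/eqP/Ha; rewrite mulrBr E subrr. Qed.

Lemma nzd_cancelr (a u v : R) : nzd a -> u * a = v * a -> u = v.
Proof. by move=> Ha; rewrite ![_ * a]mulrC; apply: nzd_cancel. Qed.

Lemma pow_elem P (a : R) k : P a -> ideal_pow P k (a ^+ k).
Proof. move=> Pa; elim: k => [//|k IH] /=; rewrite exprSr; exact: mulgen. Qed.

Lemma ideal_sum P (I0 : is_ideal P) n (F : 'I_n -> R) :
  (forall i, P (F i)) -> P (\sum_(i < n) F i).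
Proof.
case: I0 => P0 PD _ HF; elim/big_ind: _ => //.
Qed.

End Gen.

Section Det.
Variable R : comUnitRingType.
Variables (P : R -> Prop) (X dl : R).
Hypothesis HP : is_ideal P.
Hypothesis H2 : forall u v, P u -> P v -> exists i, P i /\ dl * (u * v) = X * i.

Lemma prod_form (T : Type) (r : seq T) (cc aa : T -> R) :
  (forall t, P (aa t)) ->
  exists i, P i /\ X * \prod_(t <- r) (X * cc t - dl * aa t) =
     X ^+ (size r).+1 * \prod_(t <- r) cc t + dl * X ^+ (size r) * i.
Proof.
move=> Ha; have [P0 PD PM] := HP.
elim: r => [|t r [i [Pi E]]].
  by exists 0; split => //; rewrite !big_nil; ring.
have [i' [Pi' Ei']] := H2 (Ha t) Pi.
exists (cc t * i - aa t * \prod_(t <- r) cc t - i'); split.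
  apply PD; [apply PD|]; first exact: PM.
    by rewrite -mulrN mulrC; apply PM; apply Ha.
  by rewrite -mulN1r; apply PM.
rewrite !big_cons /=.
move: E; set p := \prod_(t <- r) _; set q := \prod_(t <- r) _ => E.
have -> : X * ((X * cc t - dl * aa t) * p) = (X * cc t - dl * aa t) * (X * p) by ring.
rewrite E !exprS.
have -> : (X * cc t - dl * aa t) * (X * X ^+ size r * q + dl * X ^+ size r * i) =
  X * (X * X ^+ size r) * (cc t * q) + dl * (X * X ^+ size r) * (cc t * i - aa t * q)
  - dl * X ^+ size r * (dl * (aa t * i)) by ring.
rewrite Ei'; ring.
Qed.

Lemma det_trick (y : R) : fg_ideal P -> P y -> nzd y -> nzd X ->
  (forall g, P g -> exists m, ideal_mul P P m /\ X * g = dl * m) ->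
  exists io, P io /\ X = dl * io.
Proof.
move=> [s Hs] Py ny nX H1; have [P0 PD PM] := HP.
have Pg (i : 'I_(size s)) : P s`_i.
  apply/Hs; exists (mkseq (fun j => ((j == i)%N)%:R) (size s)); split; first by rewrite size_mkseq.
  rewrite (bigD1 i) //= nth_mkseq // eqxx mul1r big1 ?addr0 // => j ji.
  by move: ji; rewrite -val_eqE /= => /negPf; rewrite nth_mkseq // => ->; rewrite mul0r.
have comb r : P r -> exists c : 'I_(size s) -> R, r = \sum_i c i * s`_i.
  by move=> /Hs [c [_ ->]]; exists (fun i => c`_i).
have sq t : ideal_mul P P t -> exists a : 'I_(size s) -> R, (forall j, P (a j)) /\ t = \sum_j a j * s`_j.
  apply: (@mul_ind _ P P (fun t => exists a : 'I_(size s) -> R, (forall j, P (a j)) /\ t = \sum_j a j * s`_j)).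
  - exists (fun _ => 0); split => //; by rewrite big1 // => j _; rewrite mul0r.
  - move=> u v [a [Pa ->]] [b [Pb ->]]; exists (fun j => a j + b j); split; first by move=> j; apply PD.
    by rewrite -big_split; apply: eq_bigr => j _; rewrite mulrDl.
  - move=> p q Pp /comb [c ->]; exists (fun j => p * c j); split.
      by move=> j; rewrite mulrC; apply PM.
    by rewrite mulr_sumr; apply: eq_bigr => j _; rewrite mulrA.
have : forall i : 'I_(size s), exists a : 'I_(size s) -> R,
    (forall j, P (a j)) /\ X * s`_i = dl * \sum_j a j * s`_j.
  move=> i; have [t [Ht Et]] := H1 _ (Pg i); have [a [Pa Ea]] := sq t Ht.
  by exists a; rewrite -Ea.
move=> /fin_all_exists [A HA].
pose Amx : 'M[R]_(size s) := \matrix_(i, j) A i j.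
pose M : 'M[R]_(size s) := X%:M - dl *: Amx.
pose gc : 'cV[R]_(size s) := \col_i s`_i.
have Mg : M *m gc = 0.
  apply/matrixP => i k; rewrite mulmxBl mul_scalar_mx -scalemxAl !mxE.
  under eq_bigr do rewrite !mxE.
  by have [_ ->] := HA i; rewrite subrr.
have detM0 : \det M = 0.
  have H0 : (\det M) *: gc = 0 by rewrite -mul_scalar_mx -mul_adj_mx -mulmxA Mg mulmx0.
  have [c Ec] := comb y Py.
  apply: ny; rewrite mulrC Ec mulr_sumr big1 // => i _; rewrite mulrCA.
  by have := congr1 (fun Mx : 'cV[R]_(size s) => Mx i 0) H0; rewrite !mxE => ->; rewrite mulr0.
pose N := size (index_enum 'I_(size s)).
have [i0 [Pi0 E0]] : exists i, P i /\ X * \det M - X ^+ N.+1 * \det (1%:M : 'M[R]_(size s)) = dl * X ^+ N * i.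
  rewrite /determinant !mulr_sumr -sumrB.
  apply: (big_ind (fun t => exists i, P i /\ t = dl * X ^+ N * i)).
  - by exists 0; split => //; rewrite mulr0.
  - by move=> u v [a [Pa ->]] [b [Pb ->]]; exists (a + b); split; [apply PD | rewrite mulrDr].
  - move=> sg _.
    have [i [Pi Ei]] := @prod_form _ (index_enum 'I_(size s)) (fun i => (i == (sg : 'S_(size s)) i)%:R) (fun i => A i ((sg : 'S_(size s)) i))
       (fun i => (proj1 (HA i)) ((sg : 'S_(size s)) i)).
    exists ((-1) ^+ sg * i); split; first by apply PM.
    have E1 i1 : M i1 (sg i1) = X * (i1 == sg i1)%:R - dl * A i1 (sg i1).
      by rewrite !mxE mulr_natr.
    have E2 i1 : (1%:M : 'M[R]_(size s)) i1 (sg i1) = (i1 == sg i1)%:R by rewrite !mxE.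
    under eq_bigr do rewrite E1.
    under [in X in _ - X]eq_bigr do rewrite E2.
    rewrite mulrCA Ei -/N.
    move: ((-1) ^+ sg) (\prod_(t <- _) _) => sgn pp.
    ring.
move: E0; rewrite detM0 det1 mulr0 mulr1 sub0r => E0.
exists (- i0); split; first by rewrite -mulN1r; apply PM.
apply: (@nzd_cancel _ (X ^+ N)); first exact: nzd_exp.
by rewrite -exprSr -[X ^+ N.+1]opprK E0; ring.
Qed.
End Det.
Section T.
Variable R : comUnitRingType.
Variable J : R -> Prop.
Definition dflt : R * (R -> R) := (0, fun _ => 0).
Lemma sum_cons (p : R * (R -> R)) s :
  \sum_(i < size (p :: s)) (nth dflt (p :: s) i).2 (nth dflt (p :: s) i).1 =
  p.2 p.1 + \sum_(i < size s) (nth dflt s i).2 (nth dflt s i).1.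
Proof. by rewrite /= big_ord_recl /=; congr (_ + _); apply: eq_bigr => i _; rewrite lift0. Qed.

Lemma tr_ind (T : R -> Prop) r :
  T 0 -> (forall u v, T u -> T v -> T (u + v)) ->
  (forall a f, J a -> hom_to_R J f -> T (f a)) -> trace_ideal J r -> T r.
Proof.
move=> T0 TD Tg [s [Hs ->]]; elim: s Hs => [|p s IH] Hs; first by rewrite big_ord0.
rewrite sum_cons; apply: TD; first by have [] := Hs 0%N isT; apply: Tg.
by apply: IH => i Hi; apply: (Hs i.+1).
Qed.

Lemma tr_cons r a f : trace_ideal J r -> J a -> hom_to_R J f -> trace_ideal J (f a + r).
Proof.
move=> [s [Hs ->]] Ja Hf; exists ((a, f) :: s); split; last by rewrite sum_cons.
by case=> [|i] //= Hi; apply: Hs.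
Qed.

Lemma tr0 : trace_ideal J 0.
Proof. by exists [::]; split => //; rewrite big_ord0. Qed.

Lemma tr_gen a f : J a -> hom_to_R J f -> trace_ideal J (f a).
Proof. by move=> Ja Hf; rewrite -[f a]addr0; apply: tr_cons => //; apply: tr0. Qed.

Lemma trD u v : trace_ideal J u -> trace_ideal J v -> trace_ideal J (u + v).
Proof.
move=> Hu; move: v; apply: (@tr_ind (fun u => forall v, trace_ideal J v -> trace_ideal J (u + v)) u _ _ _ Hu).
- by move=> v; rewrite add0r.
- by move=> u1 u2 H1 H2 v Hv; rewrite -addrA; apply/H1/H2.
- by move=> a f Ja Hf v Hv; apply: tr_cons.
Qed.
End T.

Section Main.
Variable R : comUnitRingType.
Variables (J : R -> Prop) (x : R).
Hypothesis HJ : is_ideal J.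
Hypothesis xJ : J x.
Hypothesis xnzd : nzd x.
Local Notation I := (trace_ideal J).
Local Notation C := (colon (principal x) J).

Lemma J0 : J 0. Proof. by case: HJ. Qed.
Lemma JD a b : J a -> J b -> J (a + b). Proof. by case: HJ => _ H _; apply: H. Qed.
Lemma JM r a : J a -> J (r * a). Proof. by case: HJ => _ _ H; apply: H. Qed.

Definition phi (c y : R) : R := epsilon (inhabits 0) (fun r => c * y = r * x).

Lemma phiP c y : C c -> J y -> c * y = phi c y * x.
Proof. by move=> Cc Jy; apply: (epsilon_spec (inhabits 0) (fun r => c * y = r * x)); apply: Cc. Qed.

Lemma C0 : C 0. Proof. by move=> j _; exists 0; rewrite !mul0r. Qed.
Lemma CD a b : C a -> C b -> C (a + b).
Proof. by move=> Ca Cb j Jj; have [s Hs] := Ca j Jj; have [t Ht] := Cb j Jj; exists (s + t); rewrite mulrDl Hs Ht mulrDl. Qed.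
Lemma CM r a : C a -> C (r * a).
Proof. by move=> Ca j Jj; have [s Hs] := Ca j Jj; exists (r * s); rewrite -mulrA Hs mulrA. Qed.

Lemma phi_hom c : C c -> hom_to_R J (phi c).
Proof.
move=> Cc; split.
  move=> a b Ja Jb; apply: (nzd_cancelr xnzd); rewrite mulrDl -!phiP //; last exact: JD.
  by rewrite mulrDr.
move=> r a Ja; apply: (nzd_cancelr xnzd); rewrite -mulrA -!phiP //; last exact: JM.
by rewrite mulrCA.
Qed.

Lemma phi_x c : C c -> phi c x = c.
Proof. by move=> Cc; apply: (nzd_cancelr xnzd); rewrite -phiP // mulrC. Qed.

Lemma phi_I c y : C c -> J y -> I (phi c y).
Proof. by move=> Cc Jy; apply: tr_gen => //; apply: phi_hom. Qed.

Lemma C_I c : C c -> I c.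
Proof. by move=> Cc; rewrite -(phi_x Cc); apply: phi_I. Qed.

Lemma hom_rel f j : hom_to_R J f -> J j -> f j * x = j * f x.
Proof.
by move=> [_ Hf] Jj; rewrite mulrC -Hf // -Hf // mulrC.
Qed.

Lemma hom_C f : hom_to_R J f -> C (f x).
Proof. by move=> Hf j Jj; exists (f j); rewrite hom_rel // mulrC. Qed.

Lemma I_M r t : I t -> I (r * t).
Proof.
move=> It; apply: (@tr_ind _ J (fun t => I (r * t)) t _ _ _ It).
- by rewrite mulr0; apply: tr0.
- by move=> u v Hu Hv; rewrite mulrDr; apply: trD.
- by move=> a f Ja Hf; case: (Hf) => _ Hm; rewrite -Hm //; apply: tr_gen => //; apply: JM.
Qed.

Lemma I_ideal : is_ideal I.
Proof. split; [exact: tr0 | exact: trD | exact: I_M]. Qed.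

Lemma I_x : I x.
Proof. by apply: (tr_gen (f := id)). Qed.

Lemma x_I_JC i : I i -> ideal_mul J C (x * i).
Proof.
move=> Ii; apply: (@tr_ind _ J (fun t => ideal_mul J C (x * t)) i _ _ _ Ii).
- by rewrite mulr0; apply: mul0.
- by move=> u v Hu Hv; rewrite mulrDr; apply: mulD.
- move=> a f Ja Hf; rewrite mulrC hom_rel //; apply: mulgen => //; exact: hom_C.
Qed.

Lemma JC_xI m : ideal_mul J C m -> exists i, I i /\ m = x * i.
Proof.
apply: (@mul_ind _ J C (fun m => exists i, I i /\ m = x * i)).
- by exists 0; split; [apply: tr0 | rewrite mulr0].
- by move=> u v [i [Hi ->]] [k [Hk ->]]; exists (i + k); split; [apply: trD | rewrite mulrDr].
- move=> j c Jj Cc; exists (phi c j); split; first exact: phi_I.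
  by rewrite [j * c]mulrC (phiP Cc Jj) mulrC.
Qed.


Lemma phi_addc c c' j : C c -> C c' -> J j -> phi (c + c') j = phi c j + phi c' j.
Proof.
move=> Cc Cc' Jj; apply: (nzd_cancelr xnzd).
by rewrite -(phiP (CD Cc Cc') Jj) !mulrDl -(phiP Cc Jj) -(phiP Cc' Jj).
Qed.

Lemma phi_scalec r c j : C c -> J j -> phi (r * c) j = r * phi c j.
Proof.
move=> Cc Jj; apply: (nzd_cancelr xnzd).
by rewrite -(phiP (CM r Cc) Jj) -mulrA (phiP Cc Jj) mulrA.
Qed.

Lemma iso_IC_dual : ideal_iso I C -> iso_dual I J.
Proof.
move=> [g [gD gM gC ginj gsurj]].
exists (fun a j => phi (g a) j); split.
- by move=> a Ia; apply: phi_hom; apply: gC.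
- by move=> a b Ia Ib j Jj; rewrite gD // phi_addc //; apply: gC.
- by move=> r a Ia j Jj; rewrite gM // phi_scalec //; apply: gC.
- move=> a b Ia Ib H; apply: ginj => //.
  by rewrite -(phi_x (gC a Ia)) -(phi_x (gC b Ib)); apply: H.
- move=> f Hf; have [a [Ia ga]] := gsurj _ (hom_C Hf).
  exists a; split => // j Jj; apply: (nzd_cancelr xnzd).
  by rewrite -(phiP (gC a Ia) Jj) ga hom_rel // mulrC.
Qed.

Lemma dual_iso_IC : iso_dual I J -> ideal_iso I C.
Proof.
move=> [Phi [Hh HD HM Hinj Hsurj]].
exists (fun a => Phi a x); split.
- by move=> a b Ia Ib; apply: HD.
- by move=> r a Ia; apply: HM.
- by move=> a Ia; apply: hom_C; apply: Hh.
- move=> a b Ia Ib E; apply: Hinj => // j Jj; apply: (nzd_cancelr xnzd).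
  by rewrite !hom_rel ?E //; apply: Hh.
- move=> c Cc; have [a [Ia Ha]] := Hsurj _ (phi_hom Cc).
  by exists a; split => //; rewrite Ha // phi_x.
Qed.

Lemma eq_iso_IC : ideal_eq I C -> ideal_iso I C.
Proof.
move=> E; exists id; split => //.
- by move=> a Ia; apply/E.
- by move=> c Cc; exists c; split => //; apply/E.
Qed.


Lemma shiftJ k p m0 : ideal_pow J k p -> ideal_mul J C m0 -> ideal_mul (ideal_pow J k.+1) C (p * m0).
Proof.
move=> Hp; apply: (@mul_ind _ J C (fun m0 => ideal_mul (ideal_pow J k.+1) C (p * m0))).
- by rewrite mulr0; apply: mul0.
- by move=> u v Hu Hv; rewrite mulrDr; apply: mulD.
- by move=> j c Jj Cc; rewrite mulrA; apply: mulgen => //; apply: mulgen.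
Qed.

Variable n : nat.
Hypothesis Hred : forall r, ideal_pow J n.+1 r <-> exists y, ideal_pow J n y /\ r = x * y.

Lemma R1 m : ideal_mul (ideal_pow J n.+1) C m ->
  exists m', ideal_mul (ideal_pow J n) C m' /\ m = x * m'.
Proof.
apply: (@mul_ind _ _ C (fun m => exists m', ideal_mul (ideal_pow J n) C m' /\ m = x * m')).
- by exists 0; split; [apply: mul0 | rewrite mulr0].
- by move=> u v [u' [Hu ->]] [v' [Hv ->]]; exists (u' + v'); split; [apply: mulD | rewrite mulrDr].
- move=> p c /Hred [y [Hy ->]] Cc; exists (y * c); split; first exact: mulgen.
  by rewrite mulrA.
Qed.

Lemma iso_eq_IC : ideal_iso I C -> ideal_eq I C.
Proof.
move=> [g [gD gM gC ginj gsurj]].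
set a := g x.
have gx i : I i -> x * g i = i * a.
  by move=> Ii; rewrite -gM // mulrC gM //; apply: I_x.
have g0 : g 0 = 0 by rewrite -(mul0r 0) gM ?mul0r //; apply: tr0.
have anzd : nzd a.
  move=> b ab0; apply: xnzd; rewrite mulrC; apply: ginj.
  - by apply: I_M; apply: I_x.
  - by apply: tr0.
  rewrite g0 gM; last exact: I_x. by rewrite mulrC.
have HA j c : J j -> C c -> exists c', C c' /\ a * (j * c) = x ^+ 2 * c'.
  move=> Jj Cc; have Ip := phi_I Cc Jj.
  exists (g (phi c j)); split; first exact: gC.
  by rewrite expr2 -mulrA gx // [j * c]mulrC (phiP Cc Jj); ring.
have HB c : C c -> exists m, ideal_mul J C m /\ x ^+ 2 * c = a * m.
  move=> Cc; have [i [Ii gi]] := gsurj c Cc.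
  exists (x * i); split; first exact: x_I_JC.
  by rewrite expr2 -gi -mulrA gx //; ring.
have Ak k p c : ideal_pow J k p -> C c -> exists c', C c' /\ a ^+ k * (p * c) = (x ^+ 2) ^+ k * c'.
  elim: k p c => [|k IH] p c.
    by move=> _ Cc; exists (p * c); split; [apply: CM | rewrite !expr0 !mul1r].
  move=> Hp; move: c; apply: (@mul_ind _ _ J (fun p => forall c, C c -> exists c', C c' /\ a ^+ k.+1 * (p * c) = (x ^+ 2) ^+ k.+1 * c') p _ _ _ Hp).
  - by move=> c _; exists 0; split; [apply: C0 | rewrite !mul0r !mulr0].
  - move=> u v Hu Hv c Cc; have [u' [Cu Eu]] := Hu c Cc; have [v' [Cv Ev]] := Hv c Cc.
    by exists (u' + v'); split; [apply: CD | rewrite mulrDl mulrDr Eu Ev mulrDr].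
  - move=> q j Hq Jj c Cc; have [c1 [Cc1 E1]] := HA j c Jj Cc.
    have [c2 [Cc2 E2]] := IH q c1 Hq Cc1.
    exists c2; split => //.
    have -> : a ^+ k.+1 * (q * j * c) = a ^+ k * (q * (a * (j * c))) by rewrite exprS; ring.
    rewrite E1; have -> : a ^+ k * (q * (x ^+ 2 * c1)) = x ^+ 2 * (a ^+ k * (q * c1)) by ring.
    by rewrite E2 mulrA -exprS.
have A'k k m : ideal_mul (ideal_pow J k) C m -> exists c', C c' /\ a ^+ k * m = (x ^+ 2) ^+ k * c'.
  apply: (@mul_ind _ _ C (fun m => exists c', C c' /\ a ^+ k * m = (x ^+ 2) ^+ k * c')).
  - by exists 0; split; [exact: C0 | rewrite !mulr0].
  - move=> u v [u' [Cu Eu]] [v' [Cv Ev]]; exists (u' + v'); split; first exact: CD.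
    by rewrite !mulrDr Eu Ev.
  - by move=> p c Hp Cc; apply: Ak.
have step k m : ideal_mul (ideal_pow J k) C m ->
    exists m'', ideal_mul (ideal_pow J k.+1) C m'' /\ x ^+ 2 * m = a * m''.
  apply: (@mul_ind _ _ C (fun m => exists m'', ideal_mul (ideal_pow J k.+1) C m'' /\ x ^+ 2 * m = a * m'')).
  - by exists 0; split; [exact: mul0 | rewrite !mulr0].
  - move=> u v [u' [Cu Eu]] [v' [Cv Ev]]; exists (u' + v'); split; first exact: mulD.
    by rewrite !mulrDr Eu Ev.
  - move=> p c Hp Cc; have [m0 [Hm0 E0]] := HB c Cc; exists (p * m0); split; first exact: shiftJ.
    by rewrite mulrCA E0 mulrCA.
have Bk k c : C c -> exists m, ideal_mul (ideal_pow J k) C m /\ (x ^+ 2) ^+ k * c = a ^+ k * m.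
  move=> Cc; elim: k => [|k [m [Hm E]]].
    exists c; split; last by rewrite !expr0 !mul1r.
    by rewrite -[c]mul1r; apply: mulgen.
  have [m'' [H'' E'']] := step k m Hm; exists m''; split => //.
  have -> : (x ^+ 2) ^+ k.+1 * c = x ^+ 2 * ((x ^+ 2) ^+ k * c) by rewrite mulrA -exprS.
  by rewrite E mulrCA E'' mulrA -exprSr.
have xCaC c : C c -> exists c', C c' /\ x * c = a * c'.
  move=> Cc; have [m [Hm E]] := Bk n.+1 c Cc; have [m' [Hm' Em]] := R1 Hm.
  have [c' [Cc' E']] := A'k n m' Hm'.
  exists c'; split => //.
  have nz : nzd ((x ^+ 2) ^+ n * x) by apply: nzd_mul => //; apply: nzd_exp; apply: nzd_exp.
  apply: (nzd_cancel nz).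
  have -> : (x ^+ 2) ^+ n * x * (x * c) = (x ^+ 2) ^+ n.+1 * c by rewrite [(x ^+ 2) ^+ n.+1]exprS; ring.
  rewrite E Em; have -> : a ^+ n.+1 * (x * m') = a * x * (a ^+ n * m') by rewrite exprS; ring.
  by rewrite E'; ring.
have JCxC m : ideal_mul J C m -> exists c, C c /\ m = x * c.
  apply: (@mul_ind _ _ C (fun m => exists c, C c /\ m = x * c)).
  - by exists 0; split; [exact: C0 | rewrite mulr0].
  - move=> u v [u' [Cu ->]] [v' [Cv ->]]; exists (u' + v'); split; first exact: CD.
    by rewrite mulrDr.
  - move=> j c Jj Cc; have [c1 [Cc1 E1]] := HA j c Jj Cc; have [c2 [Cc2 E2]] := xCaC c1 Cc1.
    exists c2; split => //; apply: (nzd_cancel anzd).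
    by rewrite E1 expr2 -mulrA E2; ring.
move=> r; split; last exact: C_I.
move=> Ir; have [c [Cc E]] := JCxC _ (x_I_JC Ir).
by rewrite (nzd_cancel xnzd E).
Qed.


Lemma prodJC k a b : ideal_mul (ideal_pow J k) (ideal_pow C k) a -> ideal_mul J C b ->
  ideal_mul (ideal_pow J k.+1) (ideal_pow C k.+1) (a * b).
Proof.
move=> Ha Hb.
apply: (@mul_ind _ _ _ (fun a => ideal_mul (ideal_pow J k.+1) (ideal_pow C k.+1) (a * b)) a _ _ _ Ha).
- by rewrite mul0r; apply: mul0.
- by move=> u v Hu Hv; rewrite mulrDl; apply: mulD.
- move=> y w Hy Hw.
  apply: (@mul_ind _ J C (fun b => ideal_mul (ideal_pow J k.+1) (ideal_pow C k.+1) (y * w * b)) b _ _ _ Hb).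
  + by rewrite mulr0; apply: mul0.
  + by move=> u v Hu Hv; rewrite mulrDr; apply: mulD.
  + move=> j c Jj Cc; have -> : y * w * (j * c) = (y * j) * (w * c) by ring.
    exact: (mulgen (mulgen Hy Jj) (mulgen Hw Cc)).
Qed.

Lemma Mk k p : ideal_pow I k p -> ideal_mul (ideal_pow J k) (ideal_pow C k) (x ^+ k * p).
Proof.
elim: k p => [|k IH] p Hp; first by rewrite expr0; apply: mulgen.
apply: (@mul_ind _ _ _ (fun p => ideal_mul (ideal_pow J k.+1) (ideal_pow C k.+1) (x ^+ k.+1 * p)) p _ _ _ Hp).
- by rewrite mulr0; apply: mul0.
- by move=> u v Hu Hv; rewrite mulrDr; apply: mulD.
- move=> q u Hq Iu; have -> : x ^+ k.+1 * (q * u) = (x ^+ k * q) * (x * u) by rewrite exprSr; ring.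
  by apply: prodJC; [apply: IH | apply: x_I_JC].
Qed.

Lemma Lk k y w : ideal_pow J k y -> ideal_pow C k w ->
  exists p, ideal_pow I k p /\ y * w = x ^+ k * p.
Proof.
elim: k y w => [|k IH] y w Hy Hw; first by exists (y * w); split => //; rewrite expr0 mul1r.
move: w Hw.
apply: (@mul_ind _ _ J (fun y => forall w, ideal_pow C k.+1 w ->
   exists p, ideal_pow I k.+1 p /\ y * w = x ^+ k.+1 * p) y _ _ _ Hy).
- by move=> w _; exists 0; split; [apply: mul0 | rewrite mul0r mulr0].
- move=> u v Hu Hv w Hw; have [pu [Hpu Eu]] := Hu w Hw; have [pv [Hpv Ev]] := Hv w Hw.
  by exists (pu + pv); split; [apply: mulD | rewrite mulrDl Eu Ev mulrDr].
- move=> y' j Hy' Jj w Hw.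
  apply: (@mul_ind _ _ C (fun w => exists p, ideal_pow I k.+1 p /\ y' * j * w = x ^+ k.+1 * p) w _ _ _ Hw).
  + by exists 0; split; [apply: mul0 | rewrite !mulr0].
  + move=> u v [pu [Hpu Eu]] [pv [Hpv Ev]].
    by exists (pu + pv); split; [apply: mulD | rewrite mulrDr Eu Ev mulrDr].
  + move=> w' c Hw' Cc; have [p [Hp E]] := IH y' w' Hy' Hw'.
    exists (p * phi c j); split; first exact: (mulgen Hp (phi_I Cc Jj)).
    have -> : y' * j * (w' * c) = (y' * w') * (c * j) by ring.
    by rewrite E (phiP Cc Jj) exprSr; ring.
Qed.

Lemma P2 p : ideal_pow I n.+1 p -> ideal_mul (ideal_pow I n) C p.
Proof.
move=> Hp; have HM := Mk Hp.
suff [q [Hq E]] : exists q, ideal_mul (ideal_pow I n) C q /\ x ^+ n.+1 * p = x ^+ n.+1 * q.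
  by rewrite (nzd_cancel (nzd_exp xnzd) E).
apply: (@mul_ind _ _ _ (fun m => exists q, ideal_mul (ideal_pow I n) C q /\ m = x ^+ n.+1 * q) _ _ _ _ HM).
- by exists 0; split; [apply: mul0 | rewrite mulr0].
- move=> u v [pu [Hpu ->]] [pv [Hpv ->]].
  by exists (pu + pv); split; [apply: mulD | rewrite mulrDr].
- move=> y w Hy Hw; have [y' [Hy' ->]] := (Hred y).1 Hy.
  apply: (@mul_ind _ _ C (fun w => exists q, ideal_mul (ideal_pow I n) C q /\ x * y' * w = x ^+ n.+1 * q) w _ _ _ Hw).
  + by exists 0; split; [apply: mul0 | rewrite !mulr0].
  + move=> u v [pu [Hpu Eu]] [pv [Hpv Ev]].
    by exists (pu + pv); split; [apply: mulD | rewrite mulrDr Eu Ev mulrDr].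
  + move=> w' c Hw' Cc; have [p'' [Hp'' E]] := Lk Hy' Hw'.
    exists (p'' * c); split; first exact: mulgen.
    have -> : x * y' * (w' * c) = x * (y' * w') * c by ring.
    by rewrite E exprS; ring.
Qed.

Lemma iso_sq_eq : noetherian R -> ideal_iso I (ideal_mul I I) -> ideal_eq I C.
Proof.
move=> noeth [h [hD hM hC hinj hsurj]].
set eta := h x.
have hx i : I i -> x * h i = i * eta.
  by move=> Ii; rewrite -hM // mulrC hM //; apply: I_x.
have [dl [Idl hdl]] := hsurj (x * x) (mulgen I_x I_x).
have x3 : x * (x * x) = dl * eta by rewrite -hdl hx.
have dlh i : I i -> dl * h i = x ^+ 2 * i.
  move=> Ii; apply: (nzd_cancel xnzd).
  by rewrite mulrCA hx // mulrCA -x3 expr2; ring.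
have dlnzd : nzd dl.
  move=> b db; apply: (nzd_mul xnzd (nzd_mul xnzd xnzd)).
  by rewrite x3 mulrAC db mul0r.
have H2 u v : I u -> I v -> exists i, I i /\ dl * (u * v) = x ^+ 2 * i.
  move=> Iu Iv; have [i [Ii hi]] := hsurj _ (mulgen Iu Iv).
  by exists i; split => //; rewrite -hi dlh.
have H1 g : I g -> exists m, ideal_mul I I m /\ x ^+ 2 * g = dl * m.
  by move=> Ig; exists (h g); split; [apply: hC | rewrite dlh].
have [io [Iio Eio]] := det_trick (P := I) (X := x ^+ 2) (dl := dl) I_ideal H2 (noeth _ I_ideal) I_x xnzd (nzd_exp (k:=2) xnzd) H1.
have hio i : I i -> h i = io * i.
  by move=> Ii; apply: (nzd_cancel dlnzd); rewrite dlh // Eio mulrA.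
have ionzd : nzd io.
  by move=> b ib; apply: (nzd_exp (k:=2) xnzd); rewrite Eio -mulrA ib mulr0.
have sq2 m : ideal_mul I I m -> exists i, I i /\ m = io * i.
  by move=> /hsurj [i [Ii <-]]; exists i; split => //; apply: hio.
have Hb u c : I u -> C c -> exists c', C c' /\ u * c = io * c'.
  move=> Iu Cc; have [c' [Ic' E]] := sq2 _ (mulgen Iu (C_I Cc)).
  exists c'; split => // j Jj.
  have [i'' [_ E'']] := sq2 _ (mulgen Iu (phi_I Cc Jj)).
  exists i''; apply: (nzd_cancel ionzd).
  by rewrite mulrA -E -mulrA (phiP Cc Jj) mulrA E'' -mulrA.
have P3 k m : ideal_mul (ideal_pow I k) C m -> exists c', C c' /\ m = io ^+ k * c'.
  elim: k m => [|k IH] m Hm.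
    apply: (@mul_ind _ _ C (fun m => exists c', C c' /\ m = io ^+ 0 * c') m _ _ _ Hm).
    - by exists 0; split; [apply: C0 | rewrite mulr0].
    - by move=> u v [cu [Cu ->]] [cv [Cv ->]]; exists (cu + cv); split; [apply: CD | rewrite mulrDr].
    - by move=> p c _ Cc; exists (p * c); split; [apply: CM | rewrite expr0 mul1r].
  apply: (@mul_ind _ _ C (fun m => exists c', C c' /\ m = io ^+ k.+1 * c') m _ _ _ Hm).
  - by exists 0; split; [apply: C0 | rewrite mulr0].
  - by move=> u v [cu [Cu ->]] [cv [Cv ->]]; exists (cu + cv); split; [apply: CD | rewrite mulrDr].
  - move=> p c Hp Cc; move: c Cc.
    apply: (@mul_ind _ _ I (fun p => forall c, C c -> exists c', C c' /\ p * c = io ^+ k.+1 * c') p _ _ _ Hp).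
    + by move=> c _; exists 0; split; [apply: C0 | rewrite mul0r mulr0].
    + move=> u v Hu Hv c Cc; have [cu [Cu Eu]] := Hu c Cc; have [cv [Cv Ev]] := Hv c Cc.
      by exists (cu + cv); split; [apply: CD | rewrite mulrDl Eu Ev mulrDr].
    + move=> q u Hq Iu c Cc; have [c1 [Cc1 E1]] := Hb u c Iu Cc.
      have [c2 [Cc2 E2]] := IH _ (mulgen Hq Cc1).
      exists c2; split => //.
      by rewrite -mulrA E1 mulrCA E2 exprS mulrA.
move=> r; split; last exact: C_I.
move=> Ir.
have Hp : ideal_pow I n.+1 (io ^+ n * r) by apply: mulgen => //; apply: pow_elem.
have [c' [Cc' E]] := P3 n _ (P2 Hp).
by rewrite (nzd_cancel (nzd_exp (k:=n) ionzd) E).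
Qed.

End Main.

Lemma x_nzd (R : comUnitRingType) (J : R -> Prop) (x : R) :
  is_ideal J -> regular_ideal J -> principal_reduction x J -> nzd x.
Proof.
move=> HJ [a [Ja na]] [xJ [n Hred]] b xb.
have [y [_ E]] := (Hred _).1 (pow_elem n.+1 Ja).
by apply: (nzd_exp (k:=n.+1) na); rewrite E mulrAC xb mul0r.
Qed.

Theorem proposition3p8 (R : comUnitRingType) (J : R -> Prop) (x : R) :
  CM_local_dim_one R ->
  is_ideal J -> regular_ideal J -> principal_reduction x J ->
  let I := trace_ideal J in
  let C := colon (principal x) J in
  (ideal_iso I (ideal_mul I I) -> ideal_eq I C) /\
  (ideal_eq I C <-> ideal_iso I C) /\
  (ideal_iso I C <-> iso_dual I J).
Proof.
move=> [noeth _ _ _] HJ Hreg Hpr I C.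
have xnzd := x_nzd HJ Hreg Hpr.
case: Hpr => xJ [n Hred].
split; first by move=> H; apply: (iso_sq_eq HJ xJ xnzd Hred noeth H).
split.
  split.
    by move=> H; apply: eq_iso_IC.
  by move=> H; apply: (iso_eq_IC HJ xJ xnzd Hred H).
split.
  by move=> H; apply: (iso_IC_dual HJ xJ xnzd H).
by move=> H; apply: (dual_iso_IC HJ xJ xnzd H).
Qed.
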